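(* Let $\nu$ be a partition with $\nu_1\le n$, and let $\nu'$ be its conjugate partition. Then $\nu$ is $n$-colorless if and only if, modulo $n$, the set of integers $\{\nu'_m-m\}_{m=1}^n$ coincides with $\{1,2,\dots,n\}$.
   Context: Here $n\ge3$ is fixed. Let $c_1,\dots,c_{n-1}$ be free generators of a free $\mathbb Z$-module, put $c_0=-(c_1+\dots+c_{n-1})$, and extend the indices $n$-periodically to $\mathbb Z$. For a partition $\gamma$ let $Y(\gamma)=\{(x,y)\in\mathbb Z_{\ge1}^2:\gamma_x\ge y\}$. The partition $\gamma$ is called $n$-colorless if $\sum_{(x,y)\in Y(\gamma)}c_{x-y}=0$; equivalently, for each residue class $i$ mod $n$, the number of boxes $(x,y)\in Y(\gamma)$ with $x-y\equiv i$ is the same. The conjugate partition is given by $\nu'_m=|\{x:\nu_x\ge m\}|$. *)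

(* Defs.v *)
From HB Require Import structures.
From mathcomp Require Import all_boot all_order all_algebra.
Set Implicit Arguments. Unset Strict Implicit. Unset Printing Implicit Defensive.
Import Order.TTheory GRing.Theory Num.Theory.
Local Open Scope ring_scope.

(* A partition: a weakly decreasing finite sequence of positive integers;
   part gamma x = gamma_x (1-indexed), 0 beyond the length. *)
Definition is_partition (g : seq nat) : bool :=
  sorted geq g && all (fun p => 0 < p)%N g.

Definition part (g : seq nat) (x : nat) : nat := nth 0%N g x.-1.

(* The generators c_i of the free Z-module Z^(n-1), indices n-periodic:
   c_i = e_{i mod n} for i mod n in {1..n-1}, c_0 = -(c_1+...+c_{n-1}) = (-1,...,-1). *)
Definition gen (n : nat) (i : int) : 'rV[int]_(n.-1) :=
  let r := `|(i %% n%:Z)%Z|%N in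
  if r == 0%N then \row_(j < n.-1) (-1)
  else \row_(j < n.-1) (if (j : nat) == r.-1 then 1 else 0).

Definition content_sum (n : nat) (g : seq nat) : 'rV[int]_(n.-1) :=
  \sum_(1 <= x < (size g).+1) \sum_(1 <= y < (part g x).+1)
     gen n (x%:Z - y%:Z).

Definition colorless (n : nat) (g : seq nat) : Prop := content_sum n g = 0.

Definition conj_part (g : seq nat) (m : nat) : nat := count (fun p => m <= p)%N g.

(* Main.v *)
Require Import Defs.
From HB Require Import structures.
From mathcomp Require Import all_boot all_order all_algebra zify ring lra.
Set Implicit Arguments. Unset Strict Implicit. Unset Printing Implicit Defensive.
Import Order.TTheory GRing.Theory Num.Theory.
Local Open Scope ring_scope.

Definition dl (n : nat) (t r : int) : nat := nat_of_bool (n%:Z %| t - r)%Z.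

Lemma dl_mod (n : nat) (t : int) (r : nat) : (0 < n)%N -> (r < n)%N ->
  (n%:Z %| t - r%:Z)%Z = ((t %% n%:Z)%Z == r%:Z).
Proof.
move=> n0 rn; rewrite -eqz_mod_dvd; rewrite [X in _ == X]modz_small //.
Qed.

Lemma dl_shift n t r : dl n (t + 1) (r + 1) = dl n t r.
Proof. by rewrite /dl; have -> : t + 1 - (r + 1) = t - r by ring. Qed.

Lemma dl_per n t r : dl n t (r + n%:Z) = dl n t r.
Proof. by rewrite /dl -!eqz_mod_dvd modzDr. Qed.

Lemma dl_sym n t r : dl n (0 - t) r = dl n (0 - r) t.
Proof. by rewrite /dl; have -> : 0 - t - r = 0 - r - t by ring. Qed.

Lemma dl_sum1 n t : (0 < n)%N -> (\sum_(0 <= r < n) dl n t r%:Z = 1)%N.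
Proof.
move=> n0.
have md : ((t %% n%:Z)%Z == `|(t %% n%:Z)%Z|%N%:Z).
  by rewrite gez0_abs ?modz_ge0 // eqz_nat -lt0n.
have lt : (`|(t %% n%:Z)%Z|%N < n)%N.
  rewrite -ltz_nat gez0_abs ?modz_ge0 -?lt0n //.
  have := ltz_mod t (d:=n%:Z).
  by rewrite eqz_nat -lt0n n0 => /(_ isT); rewrite ger0_norm.
set q := `|(t %% n%:Z)%Z|%N in md lt *.
rewrite (eq_big_nat _ _ (F2 := fun r => if r == q then 1%N else 0%N)); last first.
  move=> r /andP[_ rn]; rewrite /dl dl_mod // (eqP md) eqz_nat eq_sym.
  by case: (q == r).
by rewrite -big_mkcond big_nat1_eq lt.
Qed.

Lemma gen_coord n c (j : 'I_(n.-1)) : (1 < n)%N ->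
  gen n c 0 j = (dl n c (j.+1)%:Z)%:Z - (dl n c (0%N)%:Z)%:Z.
Proof.
move=> n1; have n0 : (0 < n)%N by lia.
have jn : (j.+1 < n)%N by have := ltn_ord j; lia.
have md : ((c %% n%:Z)%Z == `|(c %% n%:Z)%Z|%N%:Z).
  by rewrite gez0_abs ?modz_ge0 // eqz_nat -lt0n n0.
rewrite /gen /dl !dl_mod // (eqP md) !eqz_nat.
set q := `|(c %% n%:Z)%Z|%N.
rewrite absz_nat; case: ifP => q0; rewrite mxE.
  by rewrite (eqP q0).
rewrite subr0.
have -> : ((j : nat) == q.-1) = (q == j.+1).
  by apply/eqP/eqP; move: q0 => /negbT; lia.
by case: (q == j.+1).
Qed.

Lemma sorted_nth_ge (s : seq nat) i y : sorted geq s -> (0 < y)%N ->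
  (y <= nth 0 s i)%N = (i < count (fun p => y <= p)%N s)%N.
Proof.
move=> ss y0; elim: s i ss => [|a s IH] i ss /=.
  by rewrite nth_nil; case: y y0.
have ss' : sorted geq s := path_sorted ss.
have al : all (geq a) s.
  by apply: order_path_min ss => u v w h1 h2; apply: leq_trans h2 h1.
have c0 : (a < y)%N -> count (fun p => y <= p)%N s = 0%N.
  move=> ay; rewrite (@eq_in_count _ _ pred0) ?count_pred0 // => p ps /=.
  have := allP al p ps => /= pa; apply/negbTE; rewrite -ltnNge; exact: leq_ltn_trans pa ay.
case: i => [|i] /=.
  case: (leqP y a) => [ya|ay]; first by [].
  by rewrite (c0 ay).
rewrite IH //; case: (leqP y a) => [ya|ay]; first by rewrite add1n.
by rewrite (c0 ay).
Qed.

Lemma sorted_nth_le0 (s : seq nat) i : sorted geq s -> (nth 0 s i <= nth 0 s 0)%N.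
Proof.
move=> ss; case e: (nth 0 s i) => [//|y].
rewrite sorted_nth_ge //.
have : (y.+1 <= nth 0 s i)%N by rewrite e.
rewrite sorted_nth_ge //; lia.
Qed.

Lemma col_transform (nu : seq nat) (n : nat) (F : nat -> nat -> nat) :
  sorted geq nu -> (part nu 1 <= n)%N ->
  (\sum_(1 <= x < (size nu).+1) \sum_(1 <= y < (part nu x).+1) F x y =
   \sum_(1 <= y < n.+1) \sum_(1 <= x < (conj_part nu y).+1) F x y)%N.
Proof.
move=> ss hn.
rewrite (eq_big_nat _ _ (F2 := fun x => \sum_(1 <= y < n.+1)
     (if (y < (part nu x).+1)%N then F x y else 0%N))%N); last first.
  move=> x _; rewrite (big_nat_widen _ _ n.+1) ?big_mkcond //.
  by apply: leq_trans hn; rewrite /part; apply: sorted_nth_le0.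
rewrite exchange_big_nat /=.
apply: eq_big_nat => y /andP[y1 _].
rewrite [RHS](big_nat_widen _ _ (size nu).+1) ?big_mkcond /=; last by rewrite ltnS count_size.
rewrite [RHS]big_mkcond; apply: eq_big_nat => x /andP[x1 _].
rewrite /part /conj_part ltnS sorted_nth_ge //.
by case: x x1.
Qed.

Definition Scol n r (y m : nat) := (\sum_(1 <= x < m.+1) dl n (x%:Z - y%:Z) r)%N.

Lemma tele n r y m : (Scol n r y m + dl n ((0%N)%:Z - y%:Z) r =
  Scol n (r + 1) y m + dl n (m%:Z - y%:Z) r)%N.
Proof.
elim: m => [|m IH]; first by rewrite /Scol !big_geq.
rewrite /Scol in IH *; rewrite big_nat_recr // [X in (_ = X + _)%N]big_nat_recr //=.
have -> : (m.+1)%:Z - y%:Z = (m%:Z - y%:Z) + 1 by lia.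
rewrite dl_shift; lia.
Qed.

Lemma dl_sym' n (t : nat) r : dl n ((0%N)%:Z - t%:Z) r = dl n ((0%N)%:Z - r) t%:Z.
Proof. by rewrite /dl; have -> : (0%N)%:Z - t%:Z - r = (0%N)%:Z - r - t%:Z by ring. Qed.

Lemma dl_sum1' n t : (0 < n)%N -> (\sum_(1 <= r < n.+1) dl n t r%:Z = 1)%N.
Proof.
move=> n0; have h := dl_sum1 t n0.
have e1 : (\sum_(0 <= r < n.+1) dl n t r%:Z = dl n t (0%N)%:Z + \sum_(1 <= r < n.+1) dl n t r%:Z)%N.
  by rewrite big_ltn.
have e2 : (\sum_(0 <= r < n.+1) dl n t r%:Z = \sum_(0 <= r < n) dl n t r%:Z + dl n t n%:Z)%N.
  by rewrite big_nat_recr.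
have e3 : dl n t n%:Z = dl n t (0%N)%:Z.
  by rewrite -(dl_per n t (0%N)%:Z) add0r.
lia.
Qed.

Definition NN n nu r := (\sum_(1 <= x < (size nu).+1) \sum_(1 <= y < (part nu x).+1) dl n (x%:Z - y%:Z) r)%N.
Definition cc n nu r := (\sum_(1 <= y < n.+1) dl n ((conj_part nu y)%:Z - y%:Z) r)%N.

Lemma Nrec n nu r : (0 < n)%N -> sorted geq nu -> (part nu 1 <= n)%N ->
  (NN n nu r + 1 = NN n nu (r + 1) + cc n nu r)%N.
Proof.
move=> n0 ss hn; rewrite /NN !(@col_transform nu n (fun x y => dl n (x%:Z - y%:Z) _)) //.
have h1 : (\sum_(1 <= y < n.+1) dl n ((0%N)%:Z - y%:Z) r = 1)%N.
  rewrite (eq_big_nat _ _ (F2 := fun y => dl n ((0%N)%:Z - r) y%:Z)); last by move=> y _; rewrite dl_sym'.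
  exact: dl_sum1'.
rewrite -[X in (_ + X)%N = _]h1 -big_split /cc -big_split /=.
apply: eq_bigr => y _; exact: tele.
Qed.

Lemma PoszSum (I : Type) (r : seq I) (P : pred I) (F : I -> nat) :
  ((\sum_(i <- r | P i) F i)%N)%:Z = \sum_(i <- r | P i) (F i)%:Z.
Proof. exact: (big_morph Posz PoszD (erefl _)). Qed.

Lemma content_coord n nu (j : 'I_(n.-1)) : (1 < n)%N ->
  content_sum n nu 0 j = (NN n nu (j.+1)%:Z)%:Z - (NN n nu (0%N)%:Z)%:Z.
Proof.
move=> n1; rewrite /content_sum /NN summxE !PoszSum -sumrB.
apply: eq_bigr => x _; rewrite summxE !PoszSum -sumrB.
by apply: eq_bigr => y _; rewrite gen_coord.
Qed.

Lemma colorless_iff n nu : (1 < n)%N -> colorless n nu <->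
  (forall j, (j < n.-1)%N -> NN n nu (j.+1)%:Z = NN n nu (0%N)%:Z).
Proof.
move=> n1; rewrite /colorless -(rowP _ 0); split.
  move=> h j jn; have := h (Ordinal jn); rewrite content_coord // mxE.
  by move/eqP; rewrite subr_eq0 eqz_nat => /eqP.
move=> h j; rewrite content_coord // mxE h ?ltn_ord //; exact: subrr.
Qed.

Lemma NN_per n nu r : NN n nu (r + n%:Z) = NN n nu r.
Proof. by apply: eq_bigr => x _; apply: eq_bigr => y _; exact: dl_per. Qed.

Lemma claimA n nu : (1 < n)%N -> sorted geq nu -> (part nu 1 <= n)%N ->
  colorless n nu <-> (forall k, (k < n)%N -> cc n nu k%:Z = 1%N).
Proof.
move=> n1 ss hn; have n0 : (0 < n)%N by lia.
have rec k : (NN n nu k%:Z + 1 = NN n nu (k.+1)%:Z + cc n nu k%:Z)%N.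
  have -> : (k.+1)%:Z = k%:Z + 1 by lia.
  exact: Nrec.
rewrite colorless_iff //; split.
  move=> h.
  have h' k : (k <= n)%N -> NN n nu k%:Z = NN n nu (0%N)%:Z.
    move=> kn; case: k kn => [//|k] kn.
    case: (ltnP k n.-1) => kl; first exact: h.
    have -> : k.+1 = n by lia.
    by rewrite -(NN_per n nu (0%N)%:Z) add0r.
  move=> k kn; have := rec k; rewrite h' ?h' //; lia.
move=> hc.
have h' k : (k < n)%N -> NN n nu k%:Z = NN n nu (0%N)%:Z.
  elim: k => [//|k IH] kn.
  have := rec k; rewrite hc; last by lia.
  rewrite IH; last by lia.
  lia.
move=> j jn; apply: h'; lia.
Qed.

Lemma sum_count (l : seq nat) (P : pred nat) : (\sum_(i <- l) (P i : nat))%N = count P l.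
Proof. by elim: l => [|a l IH]; rewrite ?big_nil ?big_cons ?IH. Qed.

Lemma memT n x : (0 < n)%N ->
  (x \in [seq ((k%:Z) %% n%:Z)%Z | k <- iota 1 n]) = (0 <= x) && (x < n%:Z).
Proof.
move=> n0; have nz : n%:Z != 0 by rewrite eqz_nat -lt0n.
apply/mapP/andP.
  case=> k _ ->; split; first exact: modz_ge0.
  by have := ltz_mod k%:Z nz; rewrite ger0_norm.
case=> x0 xn; exists (if `|x|%N == 0%N then n else `|x|%N).
  rewrite mem_iota; case: eqP => e; first lia.
  have := xn; rewrite -(gez0_abs x0) ltz_nat; lia.
case: eqP => e.
  rewrite modzz; have := gez0_abs x0; rewrite e => <- //.
by rewrite gez0_abs // modz_small // x0.
Qed.

Lemma memS n (a : nat -> int) x : (0 < n)%N ->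
  x \in [seq ((a m) %% n%:Z)%Z | m <- iota 1 n] -> (0 <= x) && (x < n%:Z).
Proof.
move=> n0; have nz : n%:Z != 0 by rewrite eqz_nat -lt0n.
case/mapP=> k _ ->; rewrite modz_ge0 //=.
by have := ltz_mod (a k) nz; rewrite ger0_norm.
Qed.

Lemma cc_count n nu k : (0 < n)%N -> (k < n)%N ->
  cc n nu k%:Z = count (pred1 k%:Z)
    [seq (((conj_part nu m)%:Z - m%:Z) %% n%:Z)%Z | m <- iota 1 n].
Proof.
move=> n0 kn; rewrite count_map /cc /index_iota subn1 /= -sum_count.
by apply: eq_bigr => y _; rewrite /dl dl_mod.
Qed.

Lemma sum_cc n nu : (0 < n)%N -> (\sum_(0 <= k < n) cc n nu k%:Z = n)%N.
Proof.
move=> n0; rewrite /cc exchange_big_nat /=.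
rewrite (eq_bigr (fun _ => 1%N)); last by move=> y _; exact: dl_sum1.
by rewrite sum_nat_const_nat subn1 muln1.
Qed.

Lemma claimB n nu : (0 < n)%N ->
  (forall k, (k < n)%N -> cc n nu k%:Z = 1%N) <->
  [seq (((conj_part nu m)%:Z - m%:Z) %% n%:Z)%Z | m <- iota 1 n]
     =i [seq ((k%:Z) %% n%:Z)%Z | k <- iota 1 n].
Proof.
move=> n0; set s := [seq _ | m <- _].
have sub x : x \in s -> x \in [seq ((k%:Z) %% n%:Z)%Z | k <- iota 1 n].
  by move=> /(memS n0); rewrite memT.
split.
  move=> hc x; apply/idP/idP; first exact: sub.
  rewrite memT // => /andP[x0 xn].
  have kn : (`|x|%N < n)%N by move: xn; rewrite -(gez0_abs x0) ltz_nat.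
  rewrite -has_pred1 has_count -(gez0_abs x0) -cc_count // hc //.
move=> heq.
have ge1 k : (k < n)%N -> (0 < cc n nu k%:Z)%N.
  by move=> kn; rewrite cc_count // -has_count has_pred1 heq memT.
have hs := sum_cc nu n0.
have e : (\sum_(0 <= k < n) (cc n nu k%:Z - 1) = 0)%N.
  have : (\sum_(0 <= k < n) (cc n nu k%:Z - 1) + \sum_(0 <= k < n) 1 = n)%N.
    rewrite -big_split /= -[RHS]hs; apply: eq_big_nat => k /andP[_ kn].
    by rewrite subnK // ge1.
  rewrite sum_nat_const_nat subn0 muln1; lia.
move=> k kn; move/eqP: e; rewrite sum_nat_seq_eq0 => /allP /(_ k).
rewrite mem_index_iota kn /= => /(_ isT) /eqP.
have := ge1 k kn; lia.
Qed.

Theorem mainTheorem9 (n : nat) (nu : seq nat) :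
  (3 <= n)%N -> is_partition nu -> (part nu 1 <= n)%N ->
  (colorless n nu <->
   [seq (((conj_part nu m)%:Z - m%:Z) %% n%:Z)%Z | m <- iota 1 n]
     =i [seq ((k%:Z) %% n%:Z)%Z | k <- iota 1 n]).
Proof.
move=> n3 /andP[ss _] hn.
rewrite claimA //; last by lia.
apply: claimB; lia.
Qed.
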